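(* The condition $C_2$ is not maximal in general: for $n=2$ (three processes), $t=1$, $k=1$ and values $V=\{0,1\}$, there is a condition $C'$ with $C_2\subsetneq C'$ such that consensus ($1$-set agreement) is solvable on $C'\times R^1_2$ (for instance $C'=C_2\cup\{(1,1,0)\}$).
   Context: Fix processes $\Pi_n=\{0,\dots,n\}$. $ImS_n$ is the set of directed graphs $G$ on $\Pi_n$ containing all self-loops such that in-neighbourhoods $In_G(a)=\{b:(b,a)\in A(G)\}$ are totally ordered by inclusion and $(a,b),(b,c)\in A(G)\Rightarrow(a,c)\in A(G)$; $IIS_n=ImS_n^\omega$. In an execution $\iota.w$, $w=G_1G_2\cdots$, processes start with inputs from $\iota$, and in round $r$ process $q$ receives the state of $p$ iff $(p,q)\in A(G_r)$, then updates its state. $Q(w)$ is the set of processes heard by every process in infinitely many rounds; the iterated $t$-resilient model is $R^t_n=\{w\in IIS_n:|Q(w)|\ge n+1-t\}$. An input vector is a map $I:\Pi_n\to V$, written $(I(0),\dots,I(n))$; a condition is a set of input vectors. $k$-set agreement over $V$: each process must decide a value that is the input of some process, and at most $k$ distinct values are decided; it is solvable on $C\times R^t_n$ if some algorithm achieves this, every process deciding after finitely many rounds, for every $I\in C$, $w\in R^t_n$. A condition $C$ is maximal if $k$-set agreement is solvable on $C\times R^t_n$ but not on $C'\times R^t_n$ for any $C'\supsetneq C$. For an input vector $I$, let $\#a_1\ge\#a_2\ge\dots$ be the numbers of occurrences of the distinct values of $I$ in nonincreasing order (with $\#a_i=0$ beyond the number of distinct values). $C_2$ is the set of input vectors with $\sum_{i=1}^{k}\#a_i-k\cdot\#a_{k+1}>t$.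 *)

(* Defs.v *)
From mathcomp Require Import all_boot all_order all_algebra.
From mathcomp Require Import boolp.
Set Implicit Arguments. Unset Strict Implicit. Unset Printing Implicit Defensive.
Import GRing.Theory Num.Theory.

(* Processes Pi_n = {0,...,n} are 'I_n.+1.
   A directed graph on Pi_n is given by its arc relation: G a b <-> (a,b) in A(G). *)
Definition graph (n : nat) := 'I_n.+1 -> 'I_n.+1 -> bool.

Definition In_nb n (G : graph n) (a : 'I_n.+1) : pred 'I_n.+1 := fun b => G b a.

Definition subset_nb n (A B : pred 'I_n.+1) := forall x, A x -> B x.

Definition ImS n (G : graph n) : Prop :=
  [/\ (forall a, G a a),
      (forall a b, subset_nb (In_nb G a) (In_nb G b) \/ subset_nb (In_nb G b) (In_nb G a))
    & (forall a b c, G a b -> G b c -> G a c)].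

(* An infinite word w = G_1 G_2 ...; round r+1 uses graph w r. *)
Definition word n := nat -> graph n.

Definition IIS n (w : word n) : Prop := forall r, ImS (w r).

Definition Q n (w : word n) : pred 'I_n.+1 :=
  fun p => `[< forall m, exists2 r, m <= r & forall q, w r p q >].

Definition R_model n t (w : word n) : Prop := IIS w /\ n.+1 - t <= #|Q w|.

Definition input (n : nat) (V : finType) := {ffun 'I_n.+1 -> V}.
Definition condition (n : nat) (V : finType) := {set input n V}.

(* A (deterministic) algorithm: arbitrary local state space, initial state from
   process identity and input, a round update from the states received
   (Some s from p iff (p,q) is an arc of the round graph), and a decision map. *)
Record algorithm (n : nat) (V : finType) := Algorithm {
  St : Type;
  init : 'I_n.+1 -> V -> St;
  update : 'I_n.+1 -> ('I_n.+1 -> option St) -> St;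
  decide : 'I_n.+1 -> St -> option V }.
Arguments init {n V} a _ _.
Arguments update {n V} a _ _.
Arguments decide {n V} a _ _.

Fixpoint state n V (A : algorithm n V) (I : input n V) (w : word n) (r : nat)
  : 'I_n.+1 -> St A :=
  match r with
  | 0 => fun p => init A p (I p)
  | r'.+1 => fun q =>
      update A q (fun p => if w r' p q then Some (@state n V A I w r' p) else None)
  end.

Arguments state {n V} A I w r.

Definition decides_at n V (A : algorithm n V) (I : input n V) (w : word n)
  (q : 'I_n.+1) (r : nat) (v : V) : Prop :=
  decide A q (state A I w r q) = Some v /\
  forall r', r' < r -> decide A q (state A I w r' q) = None.

Definition solves n t k V (A : algorithm n V) (C : condition n V) : Prop :=
  forall I w, I \in C -> R_model t w ->
    [/\ (forall q, exists r v, decides_at A I w q r v),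
        (forall q r v, decides_at A I w q r v -> exists p, I p = v)
      & (exists D : seq V, size D <= k /\
           forall q r v, decides_at A I w q r v -> v \in D)].

Definition solvable n t k V (C : condition n V) : Prop :=
  exists A : algorithm n V, solves t k A C.

Definition maximal n t k V (C : condition n V) : Prop :=
  solvable t k C /\ forall C' : condition n V, C \proper C' -> ~ solvable t k C'.

(* #a_1 >= #a_2 >= ... : multiplicities of the distinct values of I, sorted
   nonincreasingly; mult I i is #a_(i+1) (0 beyond the number of distinct values). *)
Definition mults n V (I : input n V) : seq nat :=
  sort geq [seq count_mem v (codom I) | v <- undup (codom I)].

Definition mult n V (I : input n V) (i : nat) : nat := nth 0 (mults I) i.

Definition C2 n t k (V : finType) : condition n V :=
  [set I : input n V |
    (t%:Z < (\sum_(i < k) (mult I i)%:Z) - (k * mult I k)%:Z)%R].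

(* Main.v *)
Require Import Defs.
From mathcomp Require Import all_boot all_order all_algebra.
From mathcomp Require Import boolp.

Lemma codom3 (I : input 2 'I_2) : codom I = [:: I (inord 0); I (inord 1); I (inord 2)].
Proof.
rewrite codomE !enum_ordSl enum_ord0 /=.
by congr [:: I _; I _; I _]; apply/val_inj; rewrite /= ?inordK.
Qed.
Definition PC (I : input 2 'I_2) : bool :=
  (I (inord 0) == I (inord 1)) && ((val (I (inord 2)) == 0) || (I (inord 2) == I (inord 0))).
Lemma C2P I : I \in C2 2 1 1 'I_2 -> PC I.
Proof.
rewrite inE big_ord1 mul1n /mult /mults codom3 /PC.
move: (I (inord 0)) (I (inord 1)) (I (inord 2)) => a b c.
case: a => [[|[|//]] pa]; case: b => [[|[|//]] pb]; case: c => [[|[|//]] pc];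
  by vm_compute.
Qed.
Lemma nv : [ffun i : 'I_3 => if i == inord 2 then inord 0 else (inord 1 : 'I_2)]
   \notin C2 2 1 1 'I_2.
Proof.
rewrite inE big_ord1 mul1n /mult /mults codom3 !ffunE.
have h1 : (inord 1 == inord 2 :> 'I_3) = false by apply/eqP => /(f_equal val); rewrite /= !inordK.
have h0 : (inord 0 == inord 2 :> 'I_3) = false by apply/eqP => /(f_equal val); rewrite /= !inordK.
have e0 : (inord 0 : 'I_2) = Ordinal (isT : 0 < 2) by apply/val_inj; rewrite /= inordK.
have e1 : (inord 1 : 'I_2) = Ordinal (isT : 1 < 2) by apply/val_inj; rewrite /= inordK.
rewrite h1 h0 eqxx e0 e1. by vm_compute.
Qed.

Definition gfold (f : 'I_3 -> option (option 'I_2)) (s : seq 'I_3) :=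
  foldr (fun p acc => if f p is Some (Some x) then Some x else acc) None s.

Lemma gfold_some f s p y : p \in s -> f p = Some (Some y) -> gfold f s <> None.
Proof.
elim: s => //= a s IH; rewrite in_cons => /orP [/eqP ->|ps] fp.
  by rewrite fp.
by case: (f a) => [[z|]|] //; apply: IH.
Qed.

Lemma gfold_val f s x : (forall p y, f p = Some (Some y) -> y = x) ->
  gfold f s = None \/ gfold f s = Some x.
Proof.
move=> H; elim: s => [|a s IH] /=; first by left.
case E: (f a) => [[z|]|] //; right; congr Some; exact: H E.
Qed.

Definition alg : algorithm 2 'I_2 := @Algorithm 2 'I_2 (option 'I_2)
  (fun p v => if (p == inord 2) && (val v == 0) then None else Some v)
  (fun q f => gfold f (enum 'I_3))
  (fun q s => s).

Lemma inv I w r p : PC I ->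
  state alg I w r p = None \/ state alg I w r p = Some (I (inord 0)).
Proof.
move=> /andP [/eqP e01 h2]; elim: r p => [|r IH] p /=.
  case: ifP => [_|]; first by left.
  move=> hp; right; congr Some.
  have : p = inord 0 \/ p = inord 1 \/ p = inord 2.
    case: p hp => [[|[|[|m]]] pl] hp //.
    - by left; apply/val_inj; rewrite /= inordK.
    - by right; left; apply/val_inj; rewrite /= inordK.
    - by right; right; apply/val_inj; rewrite /= inordK.
  case=> [->|[->|E]] //; rewrite E in hp *.
  move: hp; rewrite eqxx /=; case/orP: h2 => [->|/eqP ->] //.
apply: gfold_val => q y; case: (w r q p) => // -[].
by case: (IH q) => -> // -[].
Qed.

Lemma some01 I w r p : IIS w -> p != inord 2 -> state alg I w r p <> None.
Proof.
move=> Hw hp; elim: r => [|r IH] /=.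
  by rewrite (negbTE hp).
have [H _ _] := Hw r.
case E: (state alg I w r p) IH => [y|] // _.
apply: (@gfold_some _ _ p y); first by rewrite mem_enum.
by rewrite H E.
Qed.

Lemma term I w q : R_model 1 w -> exists r, state alg I w r q <> None.
Proof.
move=> [Hw HQ].
case: (boolP (q == inord 2)) => [/eqP ->|hq]; last first.
  by exists 0; exact: (@some01 I w 0 q Hw hq).
case: (pickP [pred p | Q w p && (p != inord 2)]) => [p /andP [Qp hp]|H].
  move/asboolP: Qp => /(_ 0) [r _ Hr].
  exists r.+1 => /=.
  case E: (state alg I w r p) (@some01 I w r p Hw hp) => [y|] // _.
  apply: (@gfold_some _ _ p y); first by rewrite mem_enum.
  by rewrite Hr E.
exfalso.
have : #|Q w| <= #|pred1 (inord 2 : 'I_3)|.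
  apply: subset_leq_card; apply/subsetP => x Qx.
  have := H x; rewrite /= (_ : Q w x = true) //= => /negbFE /eqP ->; by rewrite ?inE.
by rewrite card1 => /(leq_trans HQ).
Qed.

Theorem mainTheorem13 :
  let v110 : input 2 ('I_2) :=
    [ffun i : 'I_3 => if i == inord 2 then inord 0 else inord 1] in
  let C' := C2 2 1 1 ('I_2) :|: [set v110] in
  (C2 2 1 1 ('I_2) \proper C' /\ solvable 1 1 C') /\
  ~ maximal 1 1 (C2 2 1 1 ('I_2)).
Proof.
move=> v110 C'.
have Hprop : C2 2 1 1 'I_2 \proper C'.
  apply/properP; split; first exact: subsetUl.
  exists v110; first by rewrite !inE eqxx orbT.
  exact: nv.
have Hsolv : solvable 1 1 C'.
  exists alg => I w IC Hw.
  have PI : PC I.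
    move: IC; rewrite in_setU in_set1 => /orP [IC|/eqP ->].
      exact: C2P.
    rewrite /PC /v110 !ffunE.
    have h1 : (inord 1 == inord 2 :> 'I_3) = false by apply/eqP => /(f_equal val); rewrite /= !inordK.
    have h0 : (inord 0 == inord 2 :> 'I_3) = false by apply/eqP => /(f_equal val); rewrite /= !inordK.
    by rewrite h1 h0 !eqxx /= inordK.
  split.
  - move=> q; have [r0 Hr0] := @term I w q Hw.
    have ex : exists r, state alg I w r q != None by exists r0; apply/eqP.
    case: (ex_minnP ex) => r /eqP Hr Hmin.
    case E : (state alg I w r q) => [v|] //.
    exists r, v; split => //= r' lt.
    apply/eqP; apply/negPn/negP => h.
    by have := Hmin r' h; rewrite leqNgt lt.
  - move=> q r v [/= Hd _]; exists (inord 0).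
    by case: (@inv I w r q PI); rewrite Hd // => -[].
  - exists [:: I (inord 0)]; split => // q r v [/= Hd _].
    by case: (@inv I w r q PI); rewrite Hd // => -[->]; rewrite mem_seq1.
split => //.
by case=> _ H; apply: (H C').
Qed.
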